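(* Let $T$ be a positive integer, let $N=(N_l)_{0\le l\le T}$ satisfy $N_0=0$ with increments $N_{l+1}-N_l$ independent Poisson random variables with parameters $\gamma_l\ge0$, let $\mathfrak{F}=(\mathfrak{F}_k)$ be the natural augmented filtration of $N$, $I_k=(-1)^{N_k}$ (so $I_0=1$), and $u_r=\frac12(1+e^{-2\gamma_{r-1}})$, $v_r=\frac12(1-e^{-2\gamma_{r-1}})$ for $1\le r\le T$. Define the events $$\Omega_{T+1,T+1}=\{I_0=1,\dots,I_T=1\},$$ $$\Omega_{l,T+1}=\{I_0=\dots=I_{l-1}=1,\ I_l=\dots=I_T=-1\},\ 1\le l\le T,$$ $$\Omega_{l,m}=\{I_0=\dots=I_{l-1}=1,\ I_l=\dots=I_{m-1}=-1,\ I_m=1\},\ 1\le l<m\le T,$$ and $\mathcal{I}=\{(l,m);1\le l<m\le T\}\cup\{(l,T+1);1\le l\le T+1\}$. Then for every $0\le k\le T$ and $(l,m)\in\mathcal{I}$, the conditional probabilities $\mathbb{Q}_k[\Omega_{\lambda,\mu}]=\mathbb{Q}[\Omega_{\lambda,\mu}\,|\,\mathfrak{F}_k]$, $(\lambda,\mu)\in\mathcal{I}$, are constant on $\Omega_{l,m}$, with values: for $1\le\lambda<\mu\le T$, $$\mathbb{Q}_k[\Omega_{\lambda,\mu}](\Omega_{l,m})=\Big(\mathbf{1}_{k<l\wedge\lambda}+\mathbf{1}_{k\ge l\wedge\lambda}\mathbf{1}_{l=\lambda}\big(\mathbf{1}_{k<m\wedge\mu}+\mathbf{1}_{k\ge m\wedge\mu}\mathbf{1}_{m=\mu}\big)\Big)\times\Big(\mathbf{1}_{k\ge\mu}+\mathbf{1}_{\lambda\le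 k<\mu}\Big(\prod_{r=k+1}^{\mu-1}u_r\Big)v_\mu+\mathbf{1}_{k<\lambda}\Big(\prod_{r=k+1}^{\lambda-1}u_r\Big)v_\lambda\Big(\prod_{r=\lambda+1}^{\mu-1}u_r\Big)v_\mu\Big);$$ for $1\le\lambda\le T$, $$\mathbb{Q}_k[\Omega_{\lambda,T+1}](\Omega_{l,m})=\big(\mathbf{1}_{k<l\wedge\lambda}+\mathbf{1}_{k\ge l\wedge\lambda}\mathbf{1}_{l=\lambda}\mathbf{1}_{k<m}\big)\times\Big(\mathbf{1}_{k\ge\lambda}\prod_{r=k+1}^{T}u_r+\mathbf{1}_{k<\lambda}\Big(\prod_{r=k+1}^{\lambda-1}u_r\Big)v_\lambda\Big(\prod_{r=\lambda+1}^{T}u_r\Big)\Big);$$ and $$\mathbb{Q}_k[\Omega_{T+1,T+1}](\Omega_{l,m})=\mathbf{1}_{k<l}\prod_{r=k+1}^{T}u_r.$$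
   Context: For a random variable constant on an event $A$, its value on $A$ is denoted by evaluation at $A$. *)

(* Defs.v *)
From HB Require Import structures.
From mathcomp Require Import all_boot all_order all_algebra.
From mathcomp Require Import all_classical all_reals all_analysis.
Set Implicit Arguments. Unset Strict Implicit. Unset Printing Implicit Defensive.
Import Order.TTheory GRing.Theory Num.Theory.
Local Open Scope classical_set_scope.
Local Open Scope ring_scope.

(* Poisson probability mass function with parameter g >= 0
   (with 0^0 = 1, so that g = 0 gives the Dirac mass at 0). *)
Definition pois_pmf {R : realType} (g : R) (n : nat) : R :=
  g ^+ n / n`!%:R * expR (- g).

Section defs.
Context {d : measure_display} {Omega : measurableType d} {R : realType}.

Definition incr (N : nat -> Omega -> int) (l : nat) : Omega -> int :=
  fun w => N l.+1 w - N l w.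

(* mutual independence of the increments N_{l+1}-N_l, 0 <= l < T
   (integer-valued, so every subset of int is a measurable target set) *)
Definition indep_increments (P : probability Omega R)
    (N : nat -> Omega -> int) (T : nat) : Prop :=
  forall B : nat -> set int,
    P (\bigcap_(l in [set l | (l < T)%N]) (incr N l @^-1` B l)) =
    (\prod_(l < T) P (incr N l @^-1` B l))%E.

Definition nat_filtration (N : nat -> Omega -> int) (k : nat) : set (set Omega) :=
  <<s [set S | exists i (B : set int), (i <= k)%N /\ S = N i @^-1` B] >>.

(* augmentation by the P-null sets (traced on the measurable sets) *)
Definition augment (P : probability Omega R) (G : set (set Omega)) : set (set Omega) :=
  [set A | measurable A /\ exists B, G B /\ exists Z, measurable Z /\ P Z = 0%E /\
           (A `\` B) `|` (B `\` A) `<=` Z].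

Definition cond_prob_version (P : probability Omega R) (F : set (set Omega))
    (A : set Omega) (Y : Omega -> R) : Prop :=
  (forall B : set R, measurable B -> F (Y @^-1` B)) /\
  P.-integrable setT (EFin \o Y) /\
  forall B, F B -> P (A `&` B) = (\int[P]_(x in B) (Y x)%:E)%E.

Definition sgnI (N : nat -> Omega -> int) (k : nat) (w : Omega) : int :=
  (-1) ^+ `|N k w|%N.

(* Omega_{l,m}: I_j = 1 for j < l, I_j = -1 for l <= j < m, I_m = 1,
   all of this only for indices j <= T (so m = T+1 imposes nothing at m). *)
Definition Om (N : nat -> Omega -> int) (T l m : nat) : set Omega :=
  [set w | forall j, (j <= T)%N -> (j <= m)%N ->
     sgnI N j w = if (j < l)%N then 1 else if (j < m)%N then -1 else 1].
End defs.

Definition inI (T l m : nat) : bool :=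
  [&& (1 <= l)%N, (l < m)%N & (m <= T)%N] || [&& (1 <= l)%N, (l <= T.+1)%N & m == T.+1].

Definition ind {R : realType} (b : bool) : R := (b : nat)%:R.

Definition uu {R : realType} (g : nat -> R) (r : nat) : R := (1 + expR (-2 * g r.-1)) / 2.
Definition vv {R : realType} (g : nat -> R) (r : nat) : R := (1 - expR (-2 * g r.-1)) / 2.

Definition Qval {R : realType} (g : nat -> R) (T k lam mu l m : nat) : R :=
  let u := uu g in let v := vv g in
  if (mu <= T)%N then
    (ind (k < minn l lam)%N + ind (minn l lam <= k)%N * ind (l == lam)%N *
        (ind (k < minn m mu)%N + ind (minn m mu <= k)%N * ind (m == mu)%N))
    * (ind (mu <= k)%N
       + ind ((lam <= k) && (k < mu))%N * (\prod_(k.+1 <= r < mu) u r) * v mu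
       + ind (k < lam)%N * (\prod_(k.+1 <= r < lam) u r) * v lam
           * (\prod_(lam.+1 <= r < mu) u r) * v mu)
  else if (lam <= T)%N then
    (ind (k < minn l lam)%N + ind (minn l lam <= k)%N * ind (l == lam)%N * ind (k < m)%N)
    * (ind (lam <= k)%N * (\prod_(k.+1 <= r < T.+1) u r)
       + ind (k < lam)%N * (\prod_(k.+1 <= r < lam) u r) * v lam
           * (\prod_(lam.+1 <= r < T.+1) u r))
  else
    ind (k < l)%N * \prod_(k.+1 <= r < T.+1) u r.

(* Main.v *)
Require Import Defs.
From HB Require Import structures.
From mathcomp Require Import all_boot all_order all_algebra.
From mathcomp Require Import all_classical all_reals all_analysis.
From mathcomp Require Import zify ring lra.
Import Order.TTheory GRing.Theory Num.Theory numFieldNormedType.Exports.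
Local Open Scope classical_set_scope.
Local Open Scope ring_scope.
Lemma oddD_int (a b : int) : odd (absz (a + b)) = odd (absz a) (+) odd (absz b).
Proof.
have := modn2 (absz a); have := modn2 (absz b); have := modn2 (absz (a+b)).
case: (odd (absz a)); case: (odd (absz b)); case: (odd (absz (a+b))) => /=; lia.
Qed.

Section poiss.
Variable R : realType.

Definition ptarget (g : R) (b : bool) : R :=
  if b then (1 - expR (-2 * g)) / 2 else (1 + expR (-2 * g)) / 2.

Lemma exp_series_cvg (x : R) : series (exp_coeff x) @ \oo --> expR x.
Proof. exact: is_cvg_series_exp_coeff. Qed.

Lemma parity_series_cvg (g : R) (b : bool) :
  series (fun n => if odd n == b then pois_pmf g n else 0) @ \oo --> ptarget g b.
Proof.
pose s : R := if b then -1 else 1.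
have E : series (fun n => if odd n == b then pois_pmf g n else 0) =
  (fun N => (series (exp_coeff g) N + s * series (exp_coeff (- g)) N) / 2 * expR (- g)).
  apply/funext => N; rewrite /series /=.
  rewrite big_distrr /= -big_split /= big_distrl /= big_distrl /=.
  apply: eq_bigr => n _; rewrite /exp_coeff /pois_pmf /=.
  rewrite exprNn -signr_odd.
  rewrite /s; clear s; case: b; case: (odd n) => /=;
    rewrite ?expr0 ?expr1 ?mul1r ?mulN1r ?opprK ?eqxx /=; field. all: try (by rewrite ?pnatr_eq0 -?lt0n ?fact_gt0). all:idtac.
rewrite E.
have -> : ptarget g b = (expR g + s * expR (- g)) / 2 * expR (- g).
  rewrite /ptarget /s mulrDl mulrDl.
  have h1 : expR g * expR (- g) = 1 by rewrite expRxMexpNx_1.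
  have h2 : expR (- g) * expR (- g) = expR (-2 * g).
    by rewrite -expRD; congr expR; ring.
  have h3 : expR g = (expR (- g))^-1 by rewrite -expRN opprK.
  have h4 : expR (- g) != 0 by rewrite gt_eqF // expR_gt0.
  clear E; rewrite /s; clear s; rewrite -h2 h3; case: b;
    rewrite ?mul1r ?mulN1r; field; exact: h4.
exact: (cvgMr_tmp (cvgMr_tmp (cvgD (exp_series_cvg g) (cvgMl_tmp (exp_series_cvg (-g)))))).
Qed.

Lemma parity_eseries (g : R) (b : bool) :
  (\sum_(0 <= n <oo) (if odd n == b then pois_pmf g n else 0)%:E)%E = (ptarget g b)%:E.
Proof.
have h := parity_series_cvg g b.
rewrite -(cvg_lim _ h) // -EFin_lim; last exact: (cvgP _ h).
apply: congr_lim; apply/funext => N /=.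
by rewrite /series /= sumEFin.
Qed.
End poiss.
Arguments ptarget {R}.

Lemma const_set_meas d' (T' : measurableType d') (p : Prop) :
  measurable ([set _ | p] : set T').
Proof.
case: (pselect p) => hp.
  by rewrite (_ : [set _ | p] = setT); [exact: measurableT | apply/seteqP; split].
by rewrite (_ : [set _ | p] = set0); [exact: measurable0 | apply/seteqP; split].
Qed.

Lemma bigcup_count_meas d' (T' : measurableType d') (I : countType)
  (F : I -> set T') : (forall i, measurable (F i)) -> measurable (\bigcup_i F i).
Proof.
move=> mF.
have -> : \bigcup_i F i =
    \bigcup_n (if @unpickle I n is Some i then F i else set0).
  apply/seteqP; split => w /=.
    by move=> [i _ Fi]; exists (pickle i) => //; rewrite pickleK.
  by move=> [n _]; case: unpickle => // i Fi; exists i.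
by apply: bigcupT_measurable => n; case: unpickle.
Qed.

Lemma preimage_int_meas d' (T' : measurableType d') (f : T' -> int) :
  (forall z, measurable (f @^-1` [set z])) -> forall B, measurable (f @^-1` B).
Proof.
move=> mf B.
have -> : f @^-1` B = \bigcup_(z : int) (f @^-1` [set z] `&` [set _ | B z]).
  apply/seteqP; split => w /=.
    by move=> Bw; exists (f w).
  by move=> [z _ [/= -> ]].
apply: bigcup_count_meas => z; apply: measurableI => //.
exact: const_set_meas.
Qed.

Section main.
Context (d : measure_display) (Omega : measurableType d) (R : realType)
  (P : probability Omega R) (T : nat) (gamma : nat -> R) (N : nat -> Omega -> int).
Hypotheses (HT : (0 < T)%N) (Hg : forall l, (l < T)%N -> 0 <= gamma l)
  (HmN : forall l (z : int), (l <= T)%N -> measurable (N l @^-1` [set z]))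
  (HN0 : forall w, N 0%N w = 0)
  (Hpois : forall l (n : nat), (l < T)%N ->
     P (incr N l @^-1` [set (n : int)]) = (pois_pmf (gamma l) n)%:E)
  (Hind : indep_increments P N T).

Lemma PfinE A : measurable A -> P A = (fine (P A))%:E.
Proof. by move=> mA; rewrite fineK // fin_num_measure. Qed.

Lemma measN l B : (l <= T)%N -> measurable (N l @^-1` B).
Proof. by move=> lT; apply: preimage_int_meas => z; exact: HmN. Qed.

Lemma measX l B : (l < T)%N -> measurable (incr N l @^-1` B).
Proof.
move=> lT; apply: preimage_int_meas => z.
have -> : incr N l @^-1` [set z] =
    \bigcup_(y : int) (N l @^-1` [set y] `&` N l.+1 @^-1` [set y + z]).
  apply/seteqP; split => w /=.
    rewrite /incr => <-; exists (N l w) => //=; split => //; ring.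
  by move=> [y _ [/= h1 h2]]; rewrite /incr h2 h1; ring.
apply: bigcup_count_meas => y; apply: measurableI; apply: HmN => //.
exact: ltnW.
Qed.

Lemma Ppar l b : (l < T)%N ->
  P (incr N l @^-1` [set x | odd (absz x) = b]) = (ptarget (gamma l) b)%:E.
Proof.
move=> lT.
have key b' : ((ptarget (gamma l) b')%:E <= P (incr N l @^-1` [set x | odd (absz x) = b']))%E.
  rewrite -parity_eseries.
  have h := measure_bigcup P [set n | odd n == b'] (fun n => incr N l @^-1` [set (n : int)]).
  rewrite eseries_mkcond in h.
  have -> : (\sum_(0 <= n <oo) (if odd n == b' then pois_pmf (gamma l) n else 0)%:E =
     \sum_(0 <= i <oo) (if i \in [set n | odd n == b'] then P (incr N l @^-1` [set (i : int)]) else 0))%E.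
    apply: eq_eseriesr => n _; rewrite Hpois //.
    have -> : (n \in [set m | odd m == b']) = (odd n == b') by apply/idP/idP; rewrite inE.
    by case: ifP.
  rewrite -h.
  - apply: le_measure; rewrite ?inE.
    + apply: bigcup_measurable => n _; exact: measX.
    + exact: measX.
    by move=> w [n /= /eqP <- ->].
  - by move=> n _; exact: measX.
  - by move=> n m _ _ [w /= [-> []]].
have m b' : measurable (incr N l @^-1` [set x | odd (absz x) = b']) := measX _ _ lT.
have hU : (P (incr N l @^-1` [set x | odd (absz x) = true]) +
          P (incr N l @^-1` [set x | odd (absz x) = false]) = 1)%E.
  rewrite -measureU //; last first.
    by apply/seteqP; split => w //= [-> ].
  rewrite -(probability_setT P); congr (P _); apply/seteqP; split => w //= _.
  by case: (odd (absz (incr N l w))); [left|right].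
have ht : ptarget (gamma l) true + ptarget (gamma l) false = 1.
  by rewrite /ptarget; field.
move: (key true) (key false) hU.
rewrite (PfinE _ (m true)) (PfinE _ (m false)) !lee_fin -EFinD => k1 k2 [] hs.
case: b; rewrite PfinE //; congr EFin; lra.
Qed.

Definition par j w := odd (absz (N j w)).
Definition pat (l m j : nat) : bool := (l <= j)%N && (j < m)%N.

Lemma sgn_eq (b b' : bool) : ((-1 : int) ^+ b = (-1) ^+ b') <-> b = b'.
Proof. by case: b; case: b'. Qed.

Lemma Om_par l m w : Om N T l m w <->
  forall j, (j <= T)%N -> (j <= m)%N -> par j w = pat l m j.
Proof.
have e j : sgnI N j w = (-1) ^+ par j w by rewrite /sgnI /par signr_odd.
have f j : (if (j < l)%N then 1 else if (j < m)%N then -1 else 1 : int) =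
    (-1) ^+ pat l m j.
  by rewrite /pat; case: ltnP => /=; case: ltnP.
split => h j jT jm; have := h j jT jm.
  by rewrite e f => /sgn_eq.
by move=> hj; rewrite /Om e f hj.
Qed.

Lemma par_succ j w : par j.+1 w = par j w (+) odd (absz (incr N j w)).
Proof.
rewrite /par -oddD_int; congr (odd (absz _)); rewrite /incr; ring.
Qed.

Variables (k lam mu : nat).
Hypotheses (hk : (k <= T)%N) (hI : inI T lam mu).

Definition Cset := [set w | forall j, (j <= k)%N -> (j <= mu)%N -> par j w = pat lam mu j].
Definition Sset j : set int := if (k <= j < mu)%N then
  [set x | odd (absz x) = pat lam mu j (+) pat lam mu j.+1] else setT.
Definition Eset := \bigcap_(j in [set j | (j < T)%N]) incr N j @^-1` Sset j.
Definition qq j := if (k <= j < mu)%N then ptarget (gamma j) (pat lam mu j (+) pat lam mu j.+1) else 1.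

Lemma A_CE : Om N T lam mu = Cset `&` Eset.
Proof.
apply/seteqP; split => w.
  move/Om_par => h; split.
    by move=> j jk jm; apply: h => //; exact: leq_trans hk.
  move=> j /= jT; rewrite /Sset; case: ifP => // /andP[kj jm] /=.
  by rewrite -(h j) ?(ltnW jT) ?(ltnW jm) // -(h j.+1) // par_succ addKb.
move=> [hC hE]; apply/Om_par; elim=> [|j IH] jT jm.
  by apply: hC.
case: (leqP j.+1 k) => jk; first by apply: hC.
have jT' : (j < T)%N by [].
have := hE j jT'; rewrite /Sset /= ifT; last by apply/andP; split.
by rewrite par_succ IH ?(ltnW jT) ?(ltnW jm) // => ->; rewrite addKb.
Qed.

Lemma PS j : (j < T)%N -> P (incr N j @^-1` Sset j) = (qq j)%:E.
Proof.
move=> jT; rewrite /Sset /qq; case: ifP => _; first exact: Ppar.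
by rewrite preimage_setT probability_setT.
Qed.

Lemma PE : P Eset = (\prod_(j < T) qq j)%:E.
Proof.
rewrite /Eset Hind -prodEFin; apply: eq_bigr => i _; exact: PS.
Qed.

Definition GN := [set S : set Omega | exists i (B : set int), (i <= k)%N /\ S = N i @^-1` B].
Definition Pi := [set D : set Omega | exists B : nat -> set int,
  (forall j, (k <= j)%N -> B j = setT) /\
  D = \bigcap_(j in [set j | (j < T)%N]) incr N j @^-1` B j].

Lemma Pi_meas D : Pi D -> measurable D.
Proof.
move=> [B [_ ->]]; apply: bigcap_measurable; first by exists 0%N.
by move=> j jT; exact: measX.
Qed.

Lemma Pi_setI : setI_closed Pi.
Proof.
move=> D1 D2 [B1 [h1 ->]] [B2 [h2 ->]].
exists (fun j => B1 j `&` B2 j); split.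
  by move=> j kj; rewrite h1 // h2 // setIT.
by apply/seteqP; split => w /=; [move=> [H1 H2] j jT; split; [apply: H1|apply: H2] |
  move=> H; split => j jT; have [] := H j jT].
Qed.

Lemma PX_T j : P (incr N j @^-1` setT) = 1%E.
Proof. by rewrite preimage_setT probability_setT. Qed.

Lemma Pi_indep D : Pi D -> P (D `&` Eset) = (P D * P Eset)%E.
Proof.
move=> [B [hB ->]].
have -> : (\bigcap_(j in [set j | (j < T)%N]) incr N j @^-1` B j) `&` Eset =
    \bigcap_(j in [set j | (j < T)%N]) incr N j @^-1` (B j `&` Sset j).
  apply/seteqP; split => w /=.
    by move=> [H1 H2] j jT; split; [apply: H1|apply: H2].
  by move=> H; split => j jT; have [] := H j jT.
rewrite /Eset !Hind -big_split /=; apply: eq_bigr => i _.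
case: (ltnP i k) => ik.
  have -> : Sset i = setT by rewrite /Sset ifF //; apply/negbTE; rewrite negb_and -ltnNge ik.
  by rewrite setIT PX_T mule1.
by rewrite hB // setTI PX_T mul1e.
Qed.

Definition Hs := [set D : set Omega | measurable D /\ P (D `&` Eset) = (P D * P Eset)%E].

Lemma Hs_dynkin : dynkin Hs.
Proof.
have mE : measurable Eset.
  apply: bigcap_measurable; first by exists 0%N.
  by move=> j jT; exact: measX.
split.
- split => //; by rewrite setTI probability_setT mul1e.
- move=> D [mD hD]; split; first exact: measurableC.
  have hU : P Eset = (P (D `&` Eset) + P (~` D `&` Eset))%E.
    rewrite -measureU; [|exact: measurableI|apply: measurableI => //; exact: measurableC|].
      by congr (P _); rewrite -setIUl setUv setTI.
    by rewrite setIACA setICr set0I.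
  move: hU; rewrite probability_setC // hD.
  rewrite (PfinE _ mE) (PfinE _ mD) (PfinE (~` D `&` Eset)); last first.
    by apply: measurableI => //; exact: measurableC.
  rewrite -!EFinM -EFinD => -[] h; congr EFin; nra.
- move=> F tF hF; split.
    by apply: bigcupT_measurable => n; have [] := hF n.
  have mF n : measurable (F n) by have [] := hF n.
  rewrite setI_bigcupl.
  have := measure_bigcup P setT (fun n => F n `&` Eset).
  move=> ->; last 2 first.
  + by move=> n _; exact: measurableI.
  + exact: trivIset_setIr.
  have := measure_bigcup P setT F; move=> ->; last 2 first.
  + by move=> n _; exact: mF.
  + exact: tF.
  rewrite (PfinE _ mE) muleC -nneseriesZl; last by move=> n _; exact: measure_ge0.
  apply: eq_eseriesr => n _ /=; have [_ ->] := hF n.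
  by rewrite (PfinE _ mE) muleC.
Qed.

Lemma GN_sub_Pi : <<s GN >> `<=` <<s Pi >>.
Proof.
apply: smallest_sub; first exact: smallest_sigma_algebra.
move=> _ [i [B [ik ->]]].
have h : forall z, (Pi.-sigma.-measurable (N i @^-1` [set z])).
  elim: i ik => [|i IH] ik z.
    have -> : N 0%N @^-1` [set z] = [set _ : Omega | 0 = z].
      by apply/seteqP; split => w /=; rewrite HN0.
    exact: (@const_set_meas _ (g_sigma_algebraType Pi)).
  have -> : N i.+1 @^-1` [set z] =
      \bigcup_(y : int) (N i @^-1` [set y] `&` incr N i @^-1` [set z - y]).
    apply/seteqP; split => w /=.
      by move=> <-; exists (N i w).
    move=> [y _ [/= h1 h2]]; move: h2; rewrite /incr h1.
    by move=> /(congr1 (fun x => x + y)); rewrite !subrK.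
  apply: (@bigcup_count_meas _ (g_sigma_algebraType Pi)) => y.
  apply: measurableI; first by apply: IH; exact: ltnW.
  apply: sub_gen_smallest.
  exists (fun j => if j == i then [set z - y] else setT); split.
    by move=> j kj; rewrite ifF //; apply/negbTE; apply: contraTneq kj => ->; rewrite -ltnNge.
  apply/seteqP; split => w /=.
    by move=> h j jT; case: eqP => // ->.
  by move=> h; have := h i (leq_trans ik hk); rewrite eqxx.
exact: (@preimage_int_meas _ (g_sigma_algebraType Pi) (N i) h B).
Qed.

Lemma indep_FN D : <<s GN >> D -> P (D `&` Eset) = (P D * P Eset)%E.
Proof.
move=> /GN_sub_Pi hD.
suff : <<s Pi >> `<=` Hs by move=> /(_ _ hD) [].
apply: lambda_system_subset.
- exact: Pi_setI.
- by apply/dynkin_lambda_system; exact: Hs_dynkin.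
- by move=> D' hD'; split; [exact: Pi_meas | exact: Pi_indep].
- by [].
Qed.

Lemma C_FN : <<s GN >> Cset.
Proof.
have -> : Cset = \bigcap_(j in [set j | (j <= k)%N])
    N j @^-1` [set z | (j <= mu)%N -> odd (absz z) = pat lam mu j].
  by apply/seteqP; split => w /= h j jk; [move=> jm; apply: h|apply: h].
apply: (@bigcap_measurable _ (g_sigma_algebraType GN)); first by exists 0%N.
move=> j jk; apply: sub_gen_smallest; by exists j, [set z | (j <= mu)%N -> odd (absz z) = pat lam mu j].
Qed.

Lemma FN_meas : <<s GN >> `<=` measurable.
Proof.
apply: smallest_sub; first exact: sigma_algebra_measurable.
move=> _ [i [B [ik ->]]]; apply: measN; exact: leq_trans hk.
Qed.

Lemma FN_setI A B : <<s GN >> A -> <<s GN >> B -> <<s GN >> (A `&` B).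
Proof. move=> hA hB; exact: (@measurableI _ (g_sigma_algebraType GN)). Qed.

Lemma FN_setC A : <<s GN >> A -> <<s GN >> (~` A).
Proof. move=> hA; exact: (@measurableC _ (g_sigma_algebraType GN)). Qed.

Lemma FN_setU A B : <<s GN >> A -> <<s GN >> B -> <<s GN >> (A `|` B).
Proof. move=> hA hB; exact: (@measurableU _ (g_sigma_algebraType GN)). Qed.

Lemma FN_const (p : Prop) : <<s GN >> [set _ : Omega | p].
Proof. exact: (@const_set_meas _ (g_sigma_algebraType GN)). Qed.

Lemma FN_aug A : <<s GN >> A -> augment P (nat_filtration N k) A.
Proof.
move=> hA; split; first exact: FN_meas.
exists A; split => //; exists set0; split => //; split; first exact: measure0.
by rewrite setDv set0U.
Qed.

Lemma aug_setI B G : augment P (nat_filtration N k) B -> <<s GN >> G ->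
  augment P (nat_filtration N k) (B `&` G).
Proof.
move=> [mB [B0 [hB0 [Z [mZ [PZ hZ]]]]]] hG; split.
  by apply: measurableI => //; exact: FN_meas.
exists (B0 `&` G); split; first exact: FN_setI.
exists Z; split => //; split => //.
move=> w [[[Bw Gw] nB0G]|[[B0w Gw] nBG]]; apply: hZ.
  by left; split => // B0w; apply: nB0G.
by right; split => // Bw; apply: nBG.
Qed.

Lemma null_eq X1 X2 Z : measurable X1 -> measurable X2 -> measurable Z ->
  P Z = 0%E -> X1 `\` X2 `<=` Z -> X2 `\` X1 `<=` Z -> P X1 = P X2.
Proof.
move=> m1 m2 mZ PZ h1 h2.
have le12 X Y : measurable X -> measurable Y -> X `\` Y `<=` Z -> (P X <= P Y)%E.
  move=> mX mY h; apply: (@le_trans _ _ (P (Y `|` Z))).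
    apply: le_measure; [by rewrite inE|by rewrite inE; exact: measurableU|].
    by move=> w Xw; case: (pselect (Y w)) => Yw; [left|right; apply: h].
  apply: (@le_trans _ _ (P Y + P Z)%E); first exact: (measureU2 P mY mZ).
  by rewrite PZ adde0.
apply/eqP; rewrite eq_le (le12 X1 X2) //.
by rewrite (le12 X2 X1).
Qed.

Lemma mC : measurable Cset.
Proof. exact: FN_meas C_FN. Qed.

Lemma mE : measurable Eset.
Proof.
apply: bigcap_measurable; first by exists 0%N.
by move=> j jT; exact: measX.
Qed.

Definition cc := \prod_(j < T) qq j.

Lemma key3 B : augment P (nat_filtration N k) B ->
  P (Om N T lam mu `&` B) = (cc%:E * P (Cset `&` B))%E.
Proof.
move=> [mB [B0 [hB0 [Z [mZ [PZ hZ]]]]]].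
have mB0 : measurable B0 by exact: FN_meas.
have mA : measurable (Om N T lam mu).
  by rewrite A_CE; apply: measurableI; [exact: mC|exact: mE].
have sw X : measurable X -> P (X `&` B) = P (X `&` B0).
  move=> mX; apply: (null_eq _ _ _ (measurableI _ _ mX mB) (measurableI _ _ mX mB0) mZ PZ).
    by move=> w [[Aw Bw] nAB0]; apply: hZ; left; split => // B0w; apply: nAB0.
  by move=> w [[Aw B0w] nAB]; apply: hZ; right; split => // Bw; apply: nAB.
rewrite (sw _ mA) (sw _ mC).
rewrite A_CE (_ : Cset `&` Eset `&` B0 = (Cset `&` B0) `&` Eset); last first.
  by rewrite setIAC.
rewrite indep_FN; first by rewrite PE muleC.
by apply: FN_setI => //; exact: C_FN.
Qed.

Definition Yv w := cc * \1_Cset w.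

Lemma Yv_pre B : Yv @^-1` B = (Cset `&` [set _ | B cc]) `|` (~` Cset `&` [set _ | B 0]).
Proof.
apply/seteqP; split => w /=; rewrite /Yv indicE; case: (pselect (Cset w)) => h.
- by rewrite (mem_set h) mulr1 => Bc; left.
- by rewrite (memNset h) mulr0 => B0; right.
- by rewrite (mem_set h) mulr1 => -[[]|[]].
- by rewrite (memNset h) mulr0 => -[[]|[]].
Qed.

Lemma Yv_version : cond_prob_version P (augment P (nat_filtration N k)) (Om N T lam mu) Yv.
Proof.
split; [|split].
- move=> B _; rewrite Yv_pre; apply: FN_aug.
  apply: FN_setU; apply: FN_setI; try exact: FN_const.
    exact: C_FN.
  apply: FN_setC; exact: C_FN.
- have -> : EFin \o Yv = (fun w => cc%:E * (\1_Cset w)%:E)%E.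
    by apply/funext => w; rewrite /= /Yv EFinM.
  apply: integrableZl => //; exact: (integrable_indic P mC).
- move=> B hB; rewrite key3 //.
  have mB : measurable B by case: hB.
  have -> : (\int[P]_(x in B) (Yv x)%:E = \int[P]_(x in B) (cc%:E * (\1_Cset x)%:E))%E.
    by apply: eq_integral => w _; rewrite /Yv EFinM.
  rewrite integralZl //; last first.
    apply: (integrableS measurableT) => //; exact: (integrable_indic P mC).
  by rewrite integral_indic //; exact: mC.
Qed.

Definition F1 l m := (k < minn l lam)%N || (l == lam) && ((k < minn m mu)%N || (m == mu)).

Lemma C_on_Om l m w : inI T l m -> Om N T l m w -> (Cset w <-> F1 l m).
Proof.
move=> hlm /Om_par hw; move: (hI) hlm (hk); rewrite /inI /F1 => hI' hlm' hk'.
split.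
- move=> hC.
  have Ha j : (j <= k)%N -> (j <= mu)%N -> (j <= m)%N -> pat l m j = pat lam mu j.
    move=> jk jmu jm; rewrite -(hw j) ?(leq_trans jk hk) //; exact: hC.
  apply/negPn/negP => nF.
  have p1 : (minn l lam <= k)%N by lia.
  have := Ha (minn l lam) p1 ltac:(lia) ltac:(lia); rewrite /pat => e1.
  have ll : l = lam by lia.
  subst l.
  have p2 : (minn m mu <= k)%N by lia.
  have := Ha (minn m mu) p2 ltac:(lia) ltac:(lia); rewrite /pat => e2.
  lia.
- move=> hF j jk jmu.
  rewrite hw; first by rewrite /pat; lia.
    exact: leq_trans hk.
  lia.
Qed.

Definition qr r := if (k < r <= mu)%N then
  (if (r == lam) || (r == mu) then vv gamma r else uu gamma r) else 1.

Lemma qq_qr j : (j < T)%N -> qq j = qr j.+1.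
Proof.
move=> jT; rewrite /qq /qr ltnS.
case: ifP => // _.
have -> : (pat lam mu j (+) pat lam mu j.+1) = (j.+1 == lam) || (j.+1 == mu).
  by move: (hI); rewrite /inI /pat => hI'; lia.
by case: ifP.
Qed.

Lemma cc_eq : cc = \prod_(k.+1 <= r < T.+1) qr r.
Proof.
rewrite /cc -(big_mkord xpredT qq) (eq_big_nat _ _ (F2 := fun j => qr j.+1)); last first.
  by move=> j /andP[_ jT]; exact: qq_qr.
rewrite -(big_add1 _ _ 0 T.+1 xpredT qr) (big_cat_nat _ (n := k.+1)) //=.
rewrite big_nat_cond big1 ?mul1r // => r /andP[/andP[_ rk] _].
by rewrite /qr ifF //; apply/negbTE; rewrite negb_and -leqNgt -ltnS rk.
Qed.

Lemma ind1 (b : bool) : b -> ind b = 1 :> R.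
Proof. by move=> ->; rewrite /ind mulr1n. Qed.
Lemma ind0 (b : bool) : ~~ b -> ind b = 0 :> R.
Proof. by move=> /negbTE ->. Qed.

Lemma prod1 a b (F : nat -> R) : (forall r, (a <= r < b)%N -> F r = 1) ->
  \prod_(a <= r < b) F r = 1.
Proof. by move=> h; rewrite big_nat_cond big1 // => r /andP[hr _]; exact: h. Qed.

Lemma qr_u r : (k < r)%N -> (r <= mu)%N -> r != lam -> r != mu -> qr r = uu gamma r.
Proof.
move=> kr rm rl rmu; rewrite /qr kr rm /= ifF //; apply/negbTE; rewrite negb_or rl rmu //.
Qed.
Lemma qr_v r : (k < r)%N -> (r <= mu)%N -> (r == lam) || (r == mu) -> qr r = vv gamma r.
Proof. by move=> kr rm h; rewrite /qr kr rm /= h. Qed.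
Lemma qr_1 r : (mu < r)%N -> qr r = 1.
Proof. by move=> h; rewrite /qr ifF //; lia. Qed.

Lemma Qval_eq l m : inI T l m -> Qval gamma T k lam mu l m = ind (F1 l m) * cc.
Proof.
move=> hlm; move: (hI) (hlm) (hk); rewrite /inI => hI' hlm' hk'.
rewrite /Qval cc_eq.
case: ifP => muT.
  have e1 : ind (k < minn l lam)%N + ind (minn l lam <= k)%N * ind (l == lam) *
     (ind (k < minn m mu)%N + ind (minn m mu <= k)%N * ind (m == mu)) = ind (F1 l m) :> R.
    rewrite /F1 (leqNgt (minn l lam) k) (leqNgt (minn m mu) k).
    case: (k < minn l lam)%N; case: (l == lam);
      case: (k < minn m mu)%N; case: (m == mu);
      by rewrite /ind /= ?mulr1n ?mulr0n ?mul1r ?mul0r ?mulr0 ?mulr1 ?addr0 ?add0r.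
  rewrite e1; congr (_ * _).
  case: (leqP mu k) => muk.
    rewrite ind1 // ind0; last by lia.
    rewrite ind0; last by lia.
    rewrite [RHS]prod1; first by ring.
    by move=> r /andP[kr _]; apply: qr_1; lia.
  rewrite ind0; last by lia.
  case: (leqP lam k) => lamk.
    rewrite ind1; last by lia.
    rewrite ind0; last by lia.
    rewrite [in RHS](big_cat_nat _ (n := mu)) /=; [|lia|lia].
    rewrite [in RHS](big_ltn (m := mu)); last by lia.
    rewrite [X in _ = _ * (_ * X)]prod1; last by move=> r /andP[hr _]; apply: qr_1; lia.
    rewrite (qr_v mu); [|lia|lia|by rewrite eqxx orbT].
    rewrite (eq_big_nat _ _ (F1 := qr) (F2 := uu gamma)); first by ring.
    move=> r /andP[hr1 hr2]; apply: qr_u; lia.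
  rewrite ind0; last by lia.
  rewrite ind1; last by lia.
  rewrite [in RHS](big_cat_nat _ (n := lam)) /=; [|lia|lia].
  rewrite [in RHS](big_ltn (m := lam)); last by lia.
  rewrite [in RHS](big_cat_nat _ (m := lam.+1) (n := mu)) /=; [|lia|lia].
  rewrite [in RHS](big_ltn (m := mu)); last by lia.
  rewrite [X in _ = _ * (_ * (_ * (_ * X)))]prod1; last by move=> r /andP[hr _]; apply: qr_1; lia.
  rewrite (qr_v mu); [|lia|lia|by rewrite eqxx orbT].
  rewrite (qr_v lam); [|lia|lia|by rewrite eqxx].
  rewrite (eq_big_nat _ _ (m := k.+1) (n := lam) (F1 := qr) (F2 := uu gamma)); last first.
    move=> r /andP[hr1 hr2]; apply: qr_u; lia.
  rewrite (eq_big_nat _ _ (m := lam.+1) (n := mu) (F1 := qr) (F2 := uu gamma)); first by ring.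
  move=> r /andP[hr1 hr2]; apply: qr_u; lia.
case: ifP => lamT.
  have hmu : mu = T.+1 by lia.
  have e1 : ind (k < minn l lam)%N + ind (minn l lam <= k)%N * ind (l == lam) *
     ind (k < m)%N = ind (F1 l m) :> R.
    rewrite /F1 (_ : ((k < minn m mu)%N || (m == mu)) = (k < m)%N); last by lia.
    rewrite (leqNgt (minn l lam) k); case: (k < minn l lam)%N; case: (l == lam);
      case: (k < m)%N;
      by rewrite /ind /= ?mulr1n ?mulr0n ?mul1r ?mul0r ?mulr0 ?mulr1 ?addr0 ?add0r.
  rewrite e1; congr (_ * _).
  case: (leqP lam k) => lamk.
    rewrite ind1 // ind0; last by lia.
    rewrite (eq_big_nat _ _ (F1 := qr) (F2 := uu gamma)); first by ring.
    move=> r /andP[hr1 hr2]; apply: qr_u; lia.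
  rewrite ind0; last by lia.
  rewrite ind1 //.
  rewrite [in RHS](big_cat_nat _ (n := lam)) /=; [|lia|lia].
  rewrite [in RHS](big_ltn (m := lam)); last by lia.
  rewrite (qr_v lam); [|lia|lia|by rewrite eqxx].
  rewrite (eq_big_nat _ _ (m := k.+1) (n := lam) (F1 := qr) (F2 := uu gamma)); last first.
    move=> r /andP[hr1 hr2]; apply: qr_u; lia.
  rewrite (eq_big_nat _ _ (m := lam.+1) (n := T.+1) (F1 := qr) (F2 := uu gamma)); first by ring.
  move=> r /andP[hr1 hr2]; apply: qr_u; lia.
have [hl hm] : lam = T.+1 /\ mu = T.+1 by lia.
rewrite (_ : F1 l m = (k < l)%N); last by rewrite /F1; lia.
rewrite (eq_big_nat _ _ (F1 := qr) (F2 := uu gamma)) //.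
move=> r /andP[hr1 hr2]; apply: qr_u; lia.
Qed.

Lemma Yv_on_Om l m w : inI T l m -> Om N T l m w -> Yv w = Qval gamma T k lam mu l m.
Proof.
move=> hlm hw; rewrite Qval_eq // /Yv indicE.
have := C_on_Om l m w hlm hw; case: (pselect (Cset w)) => h [h1 h2].
  by rewrite (mem_set h) (ind1 _ (h1 h)) mulr1 mul1r.
rewrite (memNset h) ind0 ?mulr0 ?mul0r //; apply/negP => /h2; exact: h.
Qed.

Lemma small_null (Y' : Omega -> R) (G : set Omega) (a e : R) (B : set Omega) :
  (0 < e) -> P.-integrable setT (EFin \o Y') -> measurable B ->
  (\int[P]_(x in B) (Y' x)%:E = a%:E * P B)%E ->
  (forall w, B w -> a + e <= Y' w) -> P B = 0%E.
Proof.
move=> e0 iY mB hI1 hY.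
have : ((a + e)%:E * P B <= a%:E * P B)%E.
  rewrite -hI1 -integral_cst //.
  apply: le_integral => //.
  - exact: (finite_measure_integrable_cst P (a + e) mB).
  - exact: (integrableS measurableT).
  by move=> w /[!inE] Bw; rewrite lee_fin hY.
rewrite PfinE // -!EFinM lee_fin => h.
have p0 : 0 <= fine (P B) by apply: fine_ge0; exact: measure_ge0.
rewrite PfinE //; congr EFin; nra.
Qed.

Lemma small_null2 (Y' : Omega -> R) (a e : R) (B : set Omega) :
  (0 < e) -> P.-integrable setT (EFin \o Y') -> measurable B ->
  (\int[P]_(x in B) (Y' x)%:E = a%:E * P B)%E ->
  (forall w, B w -> Y' w <= a - e) -> P B = 0%E.
Proof.
move=> e0 iY mB hI1 hY.
have : (a%:E * P B <= (a - e)%:E * P B)%E.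
  rewrite -hI1 -integral_cst //.
  apply: le_integral => //.
  - exact: (integrableS measurableT).
  - exact: (finite_measure_integrable_cst P (a - e) mB).
  by move=> w /[!inE] Bw; rewrite lee_fin hY.
rewrite PfinE // -!EFinM lee_fin => h.
have p0 : 0 <= fine (P B) by apply: fine_ge0; exact: measure_ge0.
rewrite PfinE //; congr EFin; nra.
Qed.

Lemma ae_const (Y' : Omega -> R) (G : set Omega) (a : R) :
  cond_prob_version P (augment P (nat_filtration N k)) (Om N T lam mu) Y' ->
  <<s GN >> G ->
  (forall B, augment P (nat_filtration N k) B -> B `<=` G ->
     P (Om N T lam mu `&` B) = (a%:E * P B)%E) ->
  {ae P, forall w, G w -> Y' w = a}.
Proof.
move=> [mY' [iY' hY']] hG hB.
pose B1 n := Y' @^-1` `]a + n.+1%:R^-1, +oo[ `&` G.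
pose B2 n := Y' @^-1` `]-oo, a - n.+1%:R^-1[ `&` G.
have FB1 n : augment P (nat_filtration N k) (B1 n).
  by apply: aug_setI => //; apply: mY'; exact: measurable_itv.
have FB2 n : augment P (nat_filtration N k) (B2 n).
  by apply: aug_setI => //; apply: mY'; exact: measurable_itv.
have n1 n : P (B1 n) = 0%E.
  have mB : measurable (B1 n) by case: (FB1 n).
  have e0 : 0 < n.+1%:R^-1 :> R by rewrite invr_gt0 ltr0Sn.
  apply: (@small_null Y' G a _ _ e0 iY' mB).
  - by rewrite -hY' // hB // => w [].
  - by move=> w [/=]; rewrite in_itv /= andbT => /ltW.
have n2 n : P (B2 n) = 0%E.
  have mB : measurable (B2 n) by case: (FB2 n).
  have e0 : 0 < n.+1%:R^-1 :> R by rewrite invr_gt0 ltr0Sn.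
  apply: (@small_null2 Y' a _ _ e0 iY' mB).
  - by rewrite -hY' // hB // => w [].
  - by move=> w [/=]; rewrite in_itv /= => /ltW.
change (P.-negligible (~` [set w | G w -> Y' w = a])).
apply: (negligibleS (A := \bigcup_n (B1 n `|` B2 n))).
  move=> w /= /not_implyP [Gw /eqP neq].
  case: (ltgtP (Y' w) a) neq => // h _.
    have [n hn] := ltr_add_invr h; exists n => //; right; split => //=.
    rewrite in_itv /=; move: hn; move: (n.+1%:R^-1 : R) => e hn; lra.
  have [n hn] := ltr_add_invr h; exists n => //; left; split => //=.
  by rewrite in_itv /= andbT.
apply: negligible_bigcup => n; apply: negligibleU.
  by exists (B1 n); split; [case: (FB1 n)|exact: n1|].
by exists (B2 n); split; [case: (FB2 n)|exact: n2|].
Qed.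

Lemma main_result :
  (exists Y, cond_prob_version P (augment P (nat_filtration N k)) (Om N T lam mu) Y /\
     forall l m, inI T l m -> forall w, Om N T l m w ->
       Y w = Qval gamma T k lam mu l m) /\
  (forall Y, cond_prob_version P (augment P (nat_filtration N k)) (Om N T lam mu) Y ->
     forall l m, inI T l m ->
       {ae P, forall w, Om N T l m w -> Y w = Qval gamma T k lam mu l m}).
Proof.
split.
  exists Yv; split; first exact: Yv_version.
  by move=> l m hlm w hw; exact: Yv_on_Om.
move=> Y' hY' l m hlm.
have ae1 := ae_const Y' Cset cc hY' C_FN (fun B hB hBC =>
  eq_trans (key3 B hB) (congr1 (fun X => (cc%:E * P X)%E) (setIidr hBC))).
have h0 : forall B, augment P (nat_filtration N k) B -> B `<=` ~` Cset ->
    P (Om N T lam mu `&` B) = ((0:R)%:E * P B)%E.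
  move=> B hB hBC.
  rewrite key3 // (_ : Cset `&` B = set0) ?measure0 ?mule0 ?mul0e //.
  by apply/seteqP; split => w // [Cw /hBC].
have ae2 := ae_const Y' (~` Cset) 0 hY' (FN_setC _ C_FN) h0.
apply: filterS2 ae1 ae2 => w h1 h2 hw.
rewrite -(Yv_on_Om l m w hlm hw) /Yv indicE.
case: (pselect (Cset w)) => h.
  by rewrite (mem_set h) mulr1; exact: h1 h.
by rewrite (memNset h) mulr0; exact: h2 h.
Qed.
End main.

Theorem lemma5p9 (d : measure_display) (Omega : measurableType d) (R : realType)
  (P : probability Omega R) (T : nat) (gamma : nat -> R) (N : nat -> Omega -> int) :
  (0 < T)%N ->
  (forall l, (l < T)%N -> 0 <= gamma l) ->
  (forall l (z : int), (l <= T)%N -> measurable (N l @^-1` [set z])) ->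
  (forall w, N 0%N w = 0) ->
  (forall l (n : nat), (l < T)%N ->
     P (incr N l @^-1` [set (n : int)]) = (pois_pmf (gamma l) n)%:E) ->
  indep_increments P N T ->
  forall k lam mu, (k <= T)%N -> inI T lam mu ->
    let F := augment P (nat_filtration N k) in
    let A := Om N T lam mu in
    (exists Y, cond_prob_version P F A Y /\
       forall l m, inI T l m -> forall w, Om N T l m w ->
         Y w = Qval gamma T k lam mu l m) /\
    (forall Y, cond_prob_version P F A Y ->
       forall l m, inI T l m ->
         {ae P, forall w, Om N T l m w -> Y w = Qval gamma T k lam mu l m}).
Proof.
move=> HT Hg HmN HN0 Hpois Hind k lam mu hk hI F A.
rewrite /F /A; by apply: main_result.
Qed.
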